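(* Let $(A,\succ,\prec)$ be a finite-dimensional dendriform algebra with associated product $x*y=x\succ y+x\prec y$, and let $r\in A\otimes A$ be symmetric and nondegenerate (i.e. the induced map $r:A^*\to A$ is bijective). Define $\mathcal B(x,y)=\langle r^{-1}(x),y\rangle$ for $x,y\in A$. Then $r$ satisfies the $D$-equation $r_{12}*r_{13}=r_{13}\prec r_{23}+r_{23}\succ r_{12}$ if and only if $$\mathcal B(x*y,z)=\mathcal B(y,z\prec x)+\mathcal B(x,y\succ z)\quad\text{for all }x,y,z\in A.$$
   Context: A dendriform algebra is a vector space with bilinear products $\prec,\succ$ such that, writing $x*y=x\prec y+x\succ y$: $(x\prec y)\prec z=x\prec(y*z)$, $(x\succ y)\prec z=x\succ(y\prec z)$, $x\succ(y\succ z)=(x*y)\succ z$. Symmetric means $\sigma(r)=r$ where $\sigma(u\otimes v)=v\otimes u$. $r$ is regarded as a linear map $A^*\to A$ by $\langle u^*\otimes v^*,r\rangle=\langle u^*,r(v^* )\rangle$. For $r=\sum_i x_i\otimes y_i$: $r_{12}*r_{13}=\sum_{i,j}x_i*x_j\otimes y_i\otimes y_j$, $r_{13}\prec r_{23}=\sum_{i,j}x_i\otimes x_j\otimes y_i\prec y_j$, $r_{23}\succ r_{12}=\sum_{i,j}x_j\otimes x_i\succ y_j\otimes y_i$. *)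

(* Defs.v *)
(* A finite-dimensional algebra over a field F is modelled as
   A := 'rV[F]_n with standard basis e_i := delta_mx 0 i; tensors in A⊗A are
   n×n coefficient matrices, tensors in A⊗A⊗A are functions 'I_n^3 -> F. *)
From HB Require Import structures.
From mathcomp Require Import all_boot all_order all_algebra.
Set Implicit Arguments. Unset Strict Implicit. Unset Printing Implicit Defensive.
Import Order.TTheory GRing.Theory Num.Theory.
Local Open Scope ring_scope.

Section Dend.
Variables (F : fieldType) (n : nat).
Local Notation A := 'rV[F]_n.

Definition bilinear_op (op : A -> A -> A) : Prop :=
  (forall (a : F) (x y z : A), op (a *: x + y) z = a *: op x z + op y z) /\
  (forall (a : F) (x y z : A), op x (a *: y + z) = a *: op x y + op x z).

Definition dstar (prec succ : A -> A -> A) (x y : A) : A := prec x y + succ x y.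

Definition dendriform (prec succ : A -> A -> A) : Prop :=
  bilinear_op prec /\ bilinear_op succ /\
  (forall x y z, prec (prec x y) z = prec x (dstar prec succ y z)) /\
  (forall x y z, prec (succ x y) z = succ x (prec y z)) /\
  (forall x y z, succ x (succ y z) = succ (dstar prec succ x y) z).

Definition ebas (i : 'I_n) : A := delta_mx 0 i.

(* r = \sum_{i,j} r i j e_i ⊗ e_j *)
Definition tsymmetric (r : 'M[F]_n) : Prop := r^T = r.

(* dual pairing, elements of A^* in dual-basis coordinates *)
Definition dpair (u : 'rV[F]_n) (x : A) : F := \sum_i u 0 i * x 0 i.

(* r as a map A^* -> A :  <u ⊗ v, r> = <u, r(v)>  *)
Definition rmap (r : 'M[F]_n) (v : 'rV[F]_n) : A := v *m r^T.

Definition r_nondegenerate (r : 'M[F]_n) : Prop := bijective (rmap r).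

(* inverse of rmap r (when r is nondegenerate) *)
Definition rinv (r : 'M[F]_n) (x : A) : 'rV[F]_n := x *m invmx (r^T).

Definition formBr (r : 'M[F]_n) (x y : A) : F := dpair (rinv r x) y.

(* coefficients (p,q,s) of 3-tensors on the basis e_p ⊗ e_q ⊗ e_s *)
Definition r12_r13 (mul : A -> A -> A) (r : 'M[F]_n) (p q s : 'I_n) : F :=
  \sum_i \sum_k r i q * r k s * (mul (ebas i) (ebas k)) 0 p.
Definition r13_r23 (mul : A -> A -> A) (r : 'M[F]_n) (p q s : 'I_n) : F :=
  \sum_b \sum_d r p b * r q d * (mul (ebas b) (ebas d)) 0 s.
Definition r23_r12 (mul : A -> A -> A) (r : 'M[F]_n) (p q s : 'I_n) : F :=
  \sum_a \sum_d r p d * r a s * (mul (ebas a) (ebas d)) 0 q.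

Definition D_equation (prec succ : A -> A -> A) (r : 'M[F]_n) : Prop :=
  forall p q s, r12_r13 (dstar prec succ) r p q s =
                r13_r23 prec r p q s + r23_r12 succ r p q s.
End Dend.

(* Main.v *)
Require Import Defs.
From HB Require Import structures.
From mathcomp Require Import all_boot all_order all_algebra.
Import GRing.Theory.
Local Open Scope ring_scope.

Section Aux.
Set Implicit Arguments. Unset Strict Implicit.
Variables (F : fieldType) (n : nat).
Local Notation A := 'rV[F]_n.

Definition lin1 (f : A -> F) := forall (a : F) (x y : A), f (a *: x + y) = a * f x + f y.

Lemma lin1_0 f : lin1 f -> f 0 = 0.
Proof.
move=> H; have := H 1 0 0; rewrite scaler0 addr0 mul1r => E.
by apply: (@addrI _ (f 0)); rewrite addr0 -E.
Qed.

Lemma lin_basis f : lin1 f -> forall x, f x = \sum_i x 0 i * f (ebas F i).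
Proof.
move=> H x; rewrite {1}(row_sum_delta x).
elim/big_rec2: _ => [|i y1 y2 _ <-]; first exact: lin1_0.
by rewrite H.
Qed.

Lemma lin_ext f g : lin1 f -> lin1 g -> (forall i, f (ebas F i) = g (ebas F i)) ->
  forall x, f x = g x.
Proof.
move=> Hf Hg He x; rewrite (lin_basis Hf) (lin_basis Hg).
by apply: eq_bigr => i _; rewrite He.
Qed.

Lemma lin1_op (op : A -> A -> A) (B : A -> A -> F) :
  bilinear_op op ->
  (forall y, lin1 (fun x => B x y)) -> (forall x, lin1 (fun y => B x y)) -> True.
Proof. by []. Qed.

Lemma dpairD u : lin1 (dpair u).
Proof.
move=> a x y; rewrite /dpair mulr_sumr -big_split /=.
apply: eq_bigr => i _; rewrite !mxE mulrDr mulrCA; done.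
Qed.

Lemma formB_l r y : lin1 (fun x => formBr r x y).
Proof.
move=> a x z; rewrite /formBr /rinv mulmxDl -scalemxAl /dpair mulr_sumr -big_split /=.
by apply: eq_bigr => i _; rewrite !mxE mulrDl mulrA.
Qed.

Lemma formB_r r x : lin1 (fun y => formBr r x y).
Proof. exact: dpairD. Qed.

Lemma swap_sum (f g : 'I_n -> F) (X : 'I_n -> 'I_n -> F) :
  \sum_a f a * (\sum_b g b * X a b) = \sum_b g b * (\sum_a f a * X a b).
Proof.
under eq_bigr do rewrite mulr_sumr.
under [RHS]eq_bigr do rewrite mulr_sumr.
rewrite exchange_big /=; apply: eq_bigr => b _; apply: eq_bigr => a _.
by rewrite mulrCA.
Qed.

Lemma inj_contr (r : 'M[F]_n) (G H : 'I_n -> F) : r \in unitmx ->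
  (forall p, \sum_a r p a * G a = \sum_a r p a * H a) -> forall a, G a = H a.
Proof.
move=> ru E.
have: \row_a G a *m r^T = \row_a H a *m r^T.
  apply/rowP => p; rewrite !mxE.
  transitivity (\sum_a r p a * G a).
    by apply: eq_bigr => a _; rewrite !mxE mulrC.
  by rewrite E; apply: eq_bigr => a _; rewrite !mxE mulrC.
move=> /(congr1 (mulmx^~ (invmx r^T))).
rewrite !mulmxK ?unitmx_tr // => /rowP E2 a.
by have := E2 a; rewrite !mxE.
Qed.


Lemma dpair_e s (y : A) : dpair (ebas F s) y = y 0 s.
Proof.
rewrite /dpair (bigD1 s) //= big1 => [|i ne].
  by rewrite !mxE !eqxx mul1r addr0.
by rewrite !mxE (negbTE ne) andbF mul0r.
Qed.

Lemma dpair_mx (u x : A) : dpair u x = (u *m x^T) 0 0.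
Proof. by rewrite /dpair !mxE; apply: eq_bigr => i _; rewrite !mxE. Qed.

Lemma lin1D f g : lin1 f -> lin1 g -> lin1 (fun x => f x + g x).
Proof. by move=> Hf Hg a x y; rewrite Hf Hg mulrDr addrACA. Qed.

Lemma lin1_Bl_opl r (op : A -> A -> A) v w : bilinear_op op ->
  lin1 (fun x => formBr r (op x v) w).
Proof. by move=> [Hl _] a x y; rewrite Hl formB_l. Qed.
Lemma lin1_Bl_opr r (op : A -> A -> A) v w : bilinear_op op ->
  lin1 (fun x => formBr r (op v x) w).
Proof. by move=> [_ Hr] a x y; rewrite Hr formB_l. Qed.
Lemma lin1_Br_opl r (op : A -> A -> A) v w : bilinear_op op ->
  lin1 (fun x => formBr r w (op x v)).
Proof. by move=> [Hl _] a x y; rewrite Hl formB_r. Qed.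
Lemma lin1_Br_opr r (op : A -> A -> A) v w : bilinear_op op ->
  lin1 (fun x => formBr r w (op v x)).
Proof. by move=> [_ Hr] a x y; rewrite Hr formB_r. Qed.

Lemma dstar_bil (p s : A -> A -> A) : bilinear_op p -> bilinear_op s ->
  bilinear_op (dstar p s).
Proof.
move=> [pl pr] [sl sr]; split=> a x y z; rewrite /dstar.
  by rewrite pl sl scalerDr addrACA.
by rewrite pr sr scalerDr addrACA.
Qed.

Variable r : 'M[F]_n.
Hypothesis rs : r^T = r.
Hypothesis ru : r \in unitmx.

Lemma contr_l s y : \sum_c r s c * formBr r (ebas F c) y = y 0 s.
Proof.
transitivity (formBr r (row s r) y).
  by rewrite (lin_basis (formB_l r y)); apply: eq_bigr => c _; rewrite mxE.
rewrite /formBr /rinv -{1}rs rowE mulmxK ?unitmx_tr //.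
exact: dpair_e.
Qed.

Lemma contr_r p x : \sum_a r p a * formBr r x (ebas F a) = x 0 p.
Proof.
transitivity (formBr r x (row p r)).
  by rewrite (lin_basis (formB_r r x)); apply: eq_bigr => c _; rewrite mxE.
rewrite /formBr /rinv dpair_mx tr_row colE mulmxA mulmxKV ?unitmx_tr //.
by rewrite -colE mxE.
Qed.

Lemma rsym i j : r i j = r j i.
Proof. by rewrite -{1}rs mxE. Qed.

Lemma K1 (mul : A -> A -> A) p q s :
  r12_r13 mul r p q s = \sum_a r p a * (\sum_b r q b * (\sum_c r s c *
     formBr r (mul (ebas F b) (ebas F c)) (ebas F a))).
Proof.
rewrite swap_sum; under eq_bigr do rewrite swap_sum.
under eq_bigr do under eq_bigr do rewrite contr_r.
rewrite /r12_r13; apply: eq_bigr => i _; rewrite mulr_sumr; apply: eq_bigr => k _.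
by rewrite mulrA (rsym i q) (rsym k s).
Qed.

Lemma K2 (prec succ : A -> A -> A) p q s :
  r13_r23 prec r p q s + r23_r12 succ r p q s =
  \sum_a r p a * (\sum_b r q b * (\sum_c r s c *
     (formBr r (ebas F c) (prec (ebas F a) (ebas F b)) +
      formBr r (ebas F b) (succ (ebas F c) (ebas F a))))).
Proof.
under [RHS]eq_bigr do under eq_bigr do under eq_bigr do rewrite mulrDr.
under [RHS]eq_bigr do under eq_bigr do rewrite big_split /= mulrDr.
under [RHS]eq_bigr do rewrite big_split /= mulrDr.
rewrite big_split /=; congr (_ + _).
  under [RHS]eq_bigr do under eq_bigr do rewrite contr_l.
  rewrite /r13_r23; apply: eq_bigr => b _; rewrite mulr_sumr; apply: eq_bigr => d _.
  by rewrite mulrA.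
under [RHS]eq_bigr do rewrite swap_sum.
under [RHS]eq_bigr do under eq_bigr do rewrite contr_l.
rewrite /r23_r12 exchange_big /=; apply: eq_bigr => d _; rewrite mulr_sumr.
apply: eq_bigr => a _; by rewrite mulrA (rsym a s).
Qed.

End Aux.

Theorem theorem4p4p7 (F : fieldType) (n : nat)
  (prec succ : 'rV[F]_n -> 'rV[F]_n -> 'rV[F]_n) (r : 'M[F]_n) :
  dendriform prec succ -> tsymmetric r -> r_nondegenerate r ->
  (D_equation prec succ r <->
   forall x y z : 'rV[F]_n,
     formBr r (dstar prec succ x y) z =
     formBr r y (prec z x) + formBr r x (succ y z)).
Proof.
move=> [bp [bs _]] rs nd.
have ru : r \in unitmx.
  rewrite -unitmx_tr -row_free_unit; apply: inj_row_free => v H.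
  by apply: (bij_inj nd); rewrite /rmap H mul0mx.
have bd := dstar_bil bp bs.
set L := fun x y z => formBr r (dstar prec succ x y) z.
set R := fun x y z => formBr r y (prec z x) + formBr r x (succ y z).
have basis_gen : (forall a b c, L (ebas F a) (ebas F b) (ebas F c) =
                                R (ebas F a) (ebas F b) (ebas F c)) ->
                 forall x y z, L x y z = R x y z.
  move=> Hb x y z.
  have H1 : forall a b z, L (ebas F a) (ebas F b) z = R (ebas F a) (ebas F b) z.
    move=> a b; apply: lin_ext; first exact: formB_r.
      exact: lin1D (lin1_Br_opl _ _ _ bp) (lin1_Br_opr _ _ _ bs).
    exact: Hb.
  have H2 : forall a y z, L (ebas F a) y z = R (ebas F a) y z.
    move=> a y' z'; apply: (lin_ext (f := fun y => L (ebas F a) y z')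
                                   (g := fun y => R (ebas F a) y z')).
    - exact: lin1_Bl_opr.
    - exact: lin1D (formB_l _ _) (lin1_Br_opl _ _ _ bs).
    - by move=> i; apply: H1.
  apply: (lin_ext (f := fun x => L x y z) (g := fun x => R x y z)).
  - exact: lin1_Bl_opl.
  - exact: lin1D (lin1_Br_opr _ _ _ bp) (formB_l _ _).
  - by move=> i; apply: H2.
split.
  move=> HD; apply: basis_gen => b c a.
  have E : forall p q s, \sum_a r p a * (\sum_b r q b * (\sum_c r s c *
     L (ebas F b) (ebas F c) (ebas F a))) =
     \sum_a r p a * (\sum_b r q b * (\sum_c r s c *
     R (ebas F b) (ebas F c) (ebas F a))).
    by move=> p q s; rewrite /L /R -K1 // -K2 //; apply: HD.
  move: c; apply: (inj_contr ru) => s.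
  move: b; apply: (inj_contr ru) => q.
  move: a; apply: (inj_contr ru) => p.
  exact: E.
move=> HG p q s; rewrite K1 // K2 //.
apply: eq_bigr => a _; congr (_ * _); apply: eq_bigr => b _; congr (_ * _).
apply: eq_bigr => c _; congr (_ * _); exact: HG.
Qed.
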